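(* Let $K=\mathrm{SU}(2)$, $\mathcal{M}=\{(g_1,h_1,g_2,h_2)\in K^4:[g_1,h_1][g_2,h_2]=I\}/K$, $\mathcal{M}^i$ the set of classes of non-abelian quadruples, and $\mathcal{M}^\circ=\mu^{-1}(\tilde\Delta^\circ)$. Then $\mathcal{M}^\circ\subsetneq\mathcal{M}^i$.
   Context: $[a,b]=aba^{-1}b^{-1}$; $K$ acts by simultaneous conjugation and $[g_1;h_1;g_2;h_2]$ denotes a class. A quadruple is abelian if its entries pairwise commute. For $a\in K$ let $f(a)=\frac1\pi\arccos(\mathrm{tr}(a)/2)$; $\mu:\mathcal{M}\to\mathbb{R}^3$, $\mu([g_1;h_1;g_2;h_2])=(f(h_1),f(h_2),f(h_1h_2))$. $\tilde\Delta$ is the tetrahedron with vertices $(0,0,0),(0,1,1),(1,0,1),(1,1,0)$ and $\tilde\Delta^\circ$ its interior. *)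

(* Defs.v *)
From HB Require Import structures.
From mathcomp Require Import all_boot all_order all_algebra.
From mathcomp Require Import all_classical all_reals all_analysis.
From mathcomp Require Import complex.
Set Implicit Arguments. Unset Strict Implicit. Unset Printing Implicit Defensive.
Import Order.TTheory GRing.Theory Num.Theory.
Import numFieldNormedType.Exports.
Local Open Scope classical_set_scope.
Local Open Scope ring_scope.

Section SU2Defs.
Variable R : realType.

Definition mat2 := 'M[R[i]]_2.

Definition adj2 (A : mat2) : mat2 := (map_mx (@conjc R) A)^T.

Definition SU2 : set mat2 := [set A | A *m adj2 A = 1%:M /\ \det A = 1].

Definition comm2 (a b : mat2) : mat2 := a * b * a^-1 * b^-1.

Definition quad := (mat2 * mat2 * mat2 * mat2)%type.

Definition qg1 (q : quad) := q.1.1.1.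
Definition qh1 (q : quad) := q.1.1.2.
Definition qg2 (q : quad) := q.1.2.
Definition qh2 (q : quad) := q.2.

Definition Rel : set quad := [set q |
  [/\ SU2 (qg1 q), SU2 (qh1 q), SU2 (qg2 q), SU2 (qh2 q)
    & comm2 (qg1 q) (qh1 q) * comm2 (qg2 q) (qh2 q) = 1]].

Definition conjq (k : mat2) (q : quad) : quad :=
  (k * qg1 q * k^-1, k * qh1 q * k^-1, k * qg2 q * k^-1, k * qh2 q * k^-1).

Definition qclass (q : quad) : set quad :=
  [set q' | exists k, SU2 k /\ q' = conjq k q].

Definition Mspace : set (set quad) := [set c | exists q, Rel q /\ c = qclass q].

Definition abelianq (q : quad) : Prop :=
  let s := [:: qg1 q; qh1 q; qg2 q; qh2 q] in
  forall i j : 'I_4, nth 0 s i * nth 0 s j = nth 0 s j * nth 0 s i.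

Definition Mirr : set (set quad) :=
  [set c | exists q, [/\ Rel q, ~ abelianq q & c = qclass q]].

(* f(a) = arccos(tr(a)/2)/pi  (tr a is real for a in SU(2); we take Re) *)
Definition fSU2 (a : mat2) : R := acos (complex.Re (\tr a) / 2) / pi.

(* mu on representatives; it is conjugation invariant *)
Definition muq (q : quad) : 'rV[R]_3 :=
  \row_(i < 3) nth 0 [:: fSU2 (qh1 q); fSU2 (qh2 q); fSU2 (qh1 q * qh2 q)] i.

Definition pt3 (x y z : R) : 'rV[R]_3 := \row_(i < 3) nth 0 [:: x; y; z] i.

Definition tvert (i : 'I_4) : 'rV[R]_3 :=
  nth 0 [:: pt3 0 0 0; pt3 0 1 1; pt3 1 0 1; pt3 1 1 0] i.

Definition tDelta : set 'rV[R]_3 :=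
  [set x | exists l : 'I_4 -> R,
     [/\ forall i, 0 <= l i, \sum_(i < 4) l i = 1 & x = \sum_(i < 4) l i *: tvert i]].

Definition Mcirc : set (set quad) :=
  [set c | exists q, [/\ Rel q, c = qclass q & interior tDelta (muq q)]].

End SU2Defs.

(* Main.v *)
Require Import Defs.
From HB Require Import structures.
From mathcomp Require Import all_boot all_order all_algebra.
From mathcomp Require Import all_classical all_reals all_analysis.
From mathcomp Require Import complex.
From mathcomp Require Import ring lra.
Set Implicit Arguments. Unset Strict Implicit. Unset Printing Implicit Defensive.
Import Order.TTheory GRing.Theory Num.Theory.
Import numFieldNormedType.Exports.
Local Open Scope classical_set_scope.
Local Open Scope ring_scope.
Section S.
Variable R : realType.
Local Open Scope complex_scope.

Definition mk2 (a b c d : R[i]) : mat2 R :=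
  \matrix_(i < 2, j < 2) (if (i : nat) == 0%N then (if (j : nat) == 0%N then a else b)
                          else (if (j : nat) == 0%N then c else d)).

Lemma mk2_eta (A : mat2 R) : A = mk2 (A 0 0) (A 0 1) (A 1 0) (A 1 1).
Proof.
apply/matrixP => i j; rewrite mxE.
by case: i => [[|[|i]] Hi] //; case: j => [[|[|j]] Hj] //=; congr (A _ _); apply/val_inj.
Qed.

Lemma mk2M a b c d a' b' c' d' :
  mk2 a b c d * mk2 a' b' c' d' =
  mk2 (a*a'+b*c') (a*b'+b*d') (c*a'+d*c') (c*b'+d*d').
Proof.
apply/matrixP => i j; rewrite !mxE !big_ord_recl big_ord0 !mxE /= addr0.
by case: i => [[|[|i]] Hi] //; case: j => [[|[|j]] Hj].
Qed.

Lemma mk2_inj a b c d a' b' c' d' :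
  mk2 a b c d = mk2 a' b' c' d' -> [/\ a = a', b = b', c = c' & d = d'].
Proof.
move=> E.
have e := fun i j => congr1 (fun M : mat2 R => M i j) E.
move: (e 0 0) (e 0 1) (e 1 0) (e 1 1); rewrite !mxE /=. by [].
Qed.

Lemma mk2_adj a b c d : adj2 (mk2 a b c d) = mk2 a^* c^* b^* d^*.
Proof.
apply/matrixP => i j; rewrite !mxE.
by case: i => [[|[|i]] Hi] //; case: j => [[|[|j]] Hj].
Qed.

Lemma mk2_det a b c d : \det (mk2 a b c d) = a * d - b * c.
Proof.
rewrite (expand_det_row _ 0) !big_ord_recl big_ord0 /cofactor !det_mx11 !mxE /=.
rewrite /bump /=; ring.
Qed.

Lemma mk2_tr a b c d : \tr (mk2 a b c d) = a + d.
Proof. by rewrite /mxtrace !big_ord_recl big_ord0 !mxE /= addr0. Qed.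

Lemma mk2_1 : mk2 1 0 0 1 = 1%:M.
Proof.
apply/matrixP => i j; rewrite !mxE.
by case: i => [[|[|i]] Hi] //; case: j => [[|[|j]] Hj].
Qed.

Definition Q (a1 a2 b1 b2 : R) : mat2 R :=
  mk2 (a1 +i* a2) (b1 +i* b2) ((- b1) +i* b2) (a1 +i* (- a2)).

Lemma SU2_Q (A : mat2 R) : SU2 A ->
  exists a1 a2 b1 b2, A = Q a1 a2 b1 b2 /\ a1^+2 + a2^+2 + b1^+2 + b2^+2 = 1.
Proof.
rewrite /SU2 /= (mk2_eta A) mk2_adj mk2_det mulmxE mk2M -mk2_1.
set a := A 0 0; set b := A 0 1; set c := A 1 0; set d := A 1 1.
move=> [/mk2_inj [e1 e2 _ _] e3].
have e2' : a^* * c + b^* * d = 0.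
  move: (congr1 (@conjc R) e2); rewrite rmorphD !rmorphM /= !conjcK => ->.
  by rewrite oppr0.
have hd : d = a^*.
  have h : a^* * (a*d - b*c) - d*(a*a^* + b*b^*) = - b * (a^* * c + b^* * d) by ring.
  by move: h; rewrite e3 e1 e2' !mulr1 mulr0 => /eqP; rewrite subr_eq0 => /eqP.
have hc : c = - b^*.
  have h : - b^* * (a*d - b*c) - c*(a*a^* + b*b^*) = - a * (a^* * c + b^* * d) by ring.
  by move: h; rewrite e3 e1 e2' !mulr1 mulr0 => /eqP; rewrite subr_eq0 => /eqP.
rewrite hc hd.
clear hc hd e2 e2' e3; clearbody a b; move: e1.
case: a => a1 a2; case: b => b1 b2 => e1.
exists a1, a2, b1, b2; split.
  by rewrite /Q; simpc.
by move: (congr1 (@complex.Re R) e1); rewrite /= => <-; ring.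
Qed.

Lemma QM p1 p2 p3 p4 r1 r2 r3 r4 :
  Q p1 p2 p3 p4 * Q r1 r2 r3 r4 =
  Q (p1*r1 - p2*r2 - p3*r3 - p4*r4) (p1*r2 + p2*r1 + p3*r4 - p4*r3)
    (p1*r3 - p2*r4 + p3*r1 + p4*r2) (p1*r4 + p2*r3 - p3*r2 + p4*r1).
Proof.
rewrite /Q mk2M; simpc; congr mk2; congr Complex; ring.
Qed.

Lemma Q_inj a1 a2 a3 a4 b1 b2 b3 b4 : Q a1 a2 a3 a4 = Q b1 b2 b3 b4 ->
  [/\ a1 = b1, a2 = b2, a3 = b3 & a4 = b4].
Proof. by move=> /mk2_inj [[-> ->] [-> ->] _ _]. Qed.

Lemma Q_det a1 a2 a3 a4 : \det (Q a1 a2 a3 a4) = (a1^+2 + a2^+2 + a3^+2 + a4^+2)%:C.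
Proof. rewrite /Q mk2_det; simpc; congr Complex; ring. Qed.

Lemma Q_SU2 a1 a2 a3 a4 : a1^+2 + a2^+2 + a3^+2 + a4^+2 = 1 -> SU2 (Q a1 a2 a3 a4).
Proof.
move=> h; split; last by rewrite Q_det h.
rewrite mulmxE /Q mk2_adj mk2M -mk2_1; simpc; congr mk2; congr Complex; try ring.
all: by rewrite -h; ring.
Qed.

Lemma Q_unit a1 a2 a3 a4 : a1^+2 + a2^+2 + a3^+2 + a4^+2 = 1 ->
  Q a1 a2 a3 a4 \is a GRing.unit.
Proof. by move=> h; rewrite -[_ \is a _]/(_ \in unitmx) unitmxE Q_det h unitr1. Qed.

Lemma SU2_unit (A : mat2 R) : SU2 A -> A \is a GRing.unit.
Proof. by move=> /SU2_Q [a1 [a2 [a3 [a4 [-> h]]]]]; exact: Q_unit. Qed.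

Lemma fSU2_Q a1 a2 a3 a4 : fSU2 (Q a1 a2 a3 a4) = acos a1 / pi.
Proof.
rewrite /fSU2 /Q mk2_tr; simpc => /=; congr (acos _ / _).
by field.
Qed.




Definition Lf (a0 a1 a2 c : R) (x : 'rV[R]_3) := a0 * x 0 0 + a1 * x 0 1 + a2 * x 0 2 + c.

Lemma Lf_tDelta a0 a1 a2 c x : (forall i, 0 <= Lf a0 a1 a2 c (@tvert R i)) ->
  @tDelta R x -> 0 <= Lf a0 a1 a2 c x.
Proof.
move=> hv [l [l0 l1 ->]].
have -> : Lf a0 a1 a2 c (\sum_(i < 4) l i *: @tvert R i) = \sum_(i < 4) l i * Lf a0 a1 a2 c (@tvert R i).
  rewrite /Lf -{1}(mulr1 c) -l1; move: (@tvert R) => w.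
  rewrite !summxE !big_ord_recr !big_ord0 !mxE /=; ring.
by apply: sumr_ge0 => i _; apply: mulr_ge0.
Qed.

Lemma Lf_int a0 a1 a2 c x : (forall i, 0 <= Lf a0 a1 a2 c (@tvert R i)) ->
  `|a0| <= 1 -> `|a1| <= 1 -> `|a2| <= 1 -> 0 < a0^+2 + a1^+2 + a2^+2 ->
  interior (@tDelta R) x -> 0 < Lf a0 a1 a2 c x.
Proof.
move=> hv h0 h1 h2 hs.
rewrite /interior /= => /nbhs_ballP [e e0 He].
set d := e / 2.
have d0 : 0 < d by rewrite /d divr_gt0.
have dlt : d < e by rewrite /d; move: e0 => /= e0; lra.
set v : 'rV[R]_3 := \row_(j < 3) (- d * nth 0 [:: a0; a1; a2] j).
have : @tDelta R (x + v).
  apply: He; split => // i j.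
  rewrite (ord1 i) /ball /= !mxE opprD addrA subrr add0r normrN mulNr normrN normrM (gtr0_norm d0).
  case: j => [[|[|[|j]]] Hj] //=.
  - by move: h0; nra.
  - by move: h1; nra.
  - by move: h2; nra.
move=> /(Lf_tDelta hv).
rewrite /Lf !mxE /= => H.
have : 0 < d * (a0^+2 + a1^+2 + a2^+2) by apply: mulr_gt0.
move: H; nra.
Qed.


Lemma alg1 (a b P : R) : P != 0 -> a / P + b / P - (a + b) / P = 0.
Proof. by move=> h; field. Qed.
Lemma alg2 (a b P : R) : P != 0 -> a / P - b / P + - (a - b) / P = 0.
Proof. by move=> h; field. Qed.
Lemma alg3 (a b P : R) : P != 0 -> - (a / P) + b / P + (a - b) / P = 0.
Proof. by move=> h; field. Qed.
Lemma alg4 (a b P : R) : P != 0 -> 2 - a / P - b / P - - (a + b - P *+ 2) / P = 0.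
Proof. by move=> h; field. Qed.

Lemma trig_facet (x y z : R) : -1 <= x <= 1 -> -1 <= y <= 1 ->
  (z - x*y)^+2 = (1-x^+2)*(1-y^+2) ->
  ~ [/\ 0 < acos x / pi + acos y / pi - acos z / pi,
         0 < acos x / pi - acos y / pi + acos z / pi,
         0 < - (acos x / pi) + acos y / pi + acos z / pi &
         0 < 2 - acos x / pi - acos y / pi - acos z / pi].
Proof.
move=> hx hy hz.
have pi0 : (pi : R) != 0 by rewrite gt_eqF // pi_gt0.
have pi_pos : (0 : R) < pi := pi_gt0 R.
have ha0 := acos_ge0 hx; have ha1 := acos_lepi hx.
have hb0 := acos_ge0 hy; have hb1 := acos_lepi hy.
have cx : cos (acos x) = x by rewrite acosK // in_itv.
have cy : cos (acos y) = y by rewrite acosK // in_itv.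
have sx : sin (acos x) ^+ 2 = 1 - x^+2.
  rewrite sin_acos // sqr_sqrtr // subr_ge0.
  by move: hx => /andP [h1 h2]; nra.
have sy : sin (acos y) ^+ 2 = 1 - y^+2.
  rewrite sin_acos // sqr_sqrtr // subr_ge0.
  by move: hy => /andP [h1 h2]; nra.
set a := acos x in ha0 ha1 cx sx *; set b := acos y in hb0 hb1 cy sy *.
have : (z - x * y) ^+ 2 == (sin a * sin b) ^+ 2 by rewrite hz exprMn sx sy.
rewrite eqf_sqr => /orP [] /eqP hzz.
-
  have hzc : z = cos (a - b) by rewrite cosB cx cy -hzz; ring.
  rewrite hzc.
  case: (leP b a) => hab.
  + rewrite cosK; last by rewrite in_itv /=; apply/andP; split; lra.
    move=> [_ _ H _]; move: H.
    by rewrite (alg3 _ _ pi0) ltxx.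
  + rewrite cosKN; last by apply/andP; split; lra.
    move=> [_ H _ _]; move: H.
    by rewrite (alg2 _ _ pi0) ltxx.
- have hzc : z = cos (a + b) by rewrite cosD cx cy -[z](subrK (x*y)) hzz; ring.
  rewrite hzc.
  case: (leP (a + b) pi) => hab.
  + rewrite cosK; last by rewrite in_itv /=; apply/andP; split; lra.
    move=> [H _ _ _]; move: H.
    by rewrite (alg1 _ _ pi0) ltxx.
  + have -> : cos (a + b) = cos ((a + b - pi *+ 2)).
      by rewrite -[in LHS](subrK (pi *+ 2) (a + b)) cosD2pi.
    rewrite cosKN; last by apply/andP; split; rewrite mulr2n; lra.
    move=> [_ _ _ H]; move: H.
    by rewrite (alg4 _ _ pi0) ltxx.
Qed.


Lemma vert_ok (a0 a1 a2 c : R) : 0 <= c -> 0 <= a1 + a2 + c -> 0 <= a0 + a2 + c -> 0 <= a0 + a1 + c ->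
   forall i : 'I_4, 0 <= Lf a0 a1 a2 c (@tvert R i).
Proof.
move=> H0 H1 H2 H3.
case=> [[|[|[|[|i]]]] Hi] //.
all: rewrite /Lf /tvert /pt3 /= !mxE /=; lra.
Qed.

Lemma int_facets (p : 'rV[R]_3) : interior (@tDelta R) p ->
  [/\ 0 < p 0 0 + p 0 1 - p 0 2, 0 < p 0 0 - p 0 1 + p 0 2,
       0 < - p 0 0 + p 0 1 + p 0 2 & 0 < 2 - p 0 0 - p 0 1 - p 0 2].
Proof.
move=> hp.
have n1 : `|(1:R)| <= 1 by rewrite normr1.
have n2 : `|(-1:R)| <= 1 by rewrite normrN normr1.
have s3 : (0:R) < 1^+2 + 1^+2 + 1^+2 by rewrite expr1n; lra.
have s3' : forall a b c : R, a^+2 = 1 -> b^+2 = 1 -> c^+2 = 1 -> (0:R) < a^+2 + b^+2 + c^+2.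
  by move=> a b c -> -> ->; lra.
have q1 : (1:R)^+2 = 1 by rewrite expr1n.
have q2 : (-1:R)^+2 = 1 by rewrite sqrrN expr1n.
have h1 : 0 < Lf 1 1 (-1) 0 p.
  apply: Lf_int => //; [apply: vert_ok; lra | exact: s3'].
have h2 : 0 < Lf 1 (-1) 1 0 p.
  apply: Lf_int => //; [apply: vert_ok; lra | exact: s3'].
have h3 : 0 < Lf (-1) 1 1 0 p.
  apply: Lf_int => //; [apply: vert_ok; lra | exact: s3'].
have h4 : 0 < Lf (-1) (-1) (-1) 2 p.
  apply: Lf_int => //; [apply: vert_ok; lra | exact: s3'].
move: h1 h2 h3 h4; rewrite /Lf => h1 h2 h3 h4; split; lra.
Qed.
End S.

Lemma part1 (R : realType) : @Mcirc R `<=` @Mirr R.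
Proof.
move=> c [q [hR -> hint]]; exists q; split => // hab.
move: hR hint hab; case: q => [[[g1 h1] g2] h2].
rewrite /Rel /abelianq /qg1 /qh1 /qg2 /qh2 /= => [[_ S1 _ S2 _]] hint hab.
have := hab (@Ordinal 4 1 isT) (@Ordinal 4 3 isT); rewrite /= => hc.
move: hint; rewrite /muq.
have [p1 [p2 [p3 [p4 [E1 hp]]]]] := SU2_Q S1.
have [r1 [r2 [r3 [r4 [E2 hr]]]]] := SU2_Q S2.
move: hc; rewrite E1 E2 !QM => /Q_inj [_ c2 c3 c4].
move=> /int_facets; rewrite !mxE /= !fSU2_Q.
apply: trig_facet.
- by apply/andP; split; nra.
- by apply/andP; split; nra.
- have k : (p2*r2 + p3*r3 + p4*r4)^+2 = (p2^+2+p3^+2+p4^+2)*(r2^+2+r3^+2+r4^+2)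
     - ((p3*r4-p4*r3)^+2 + (p4*r2-p2*r4)^+2 + (p2*r3-p3*r2)^+2) by ring.
  have e1 : p3*r4 - p4*r3 = 0 by lra.
  have e2 : p4*r2 - p2*r4 = 0 by lra.
  have e3 : p2*r3 - p3*r2 = 0 by lra.
  rewrite e1 e2 e3 expr0n /= !addr0 subr0 in k.
  have -> : p1 * r1 - p2 * r2 - p3 * r3 - p4 * r4 - p1 * r1 = - (p2*r2 + p3*r3 + p4*r4) by ring.
  rewrite sqrrN k.
  have -> : 1 - p1^+2 = p2^+2+p3^+2+p4^+2 by rewrite -hp; ring.
  have -> : 1 - r1^+2 = r2^+2+r3^+2+r4^+2 by rewrite -hr; ring.
  by [].
Qed.

Lemma Q1 (R : realType) : Q 1 0 0 0 = 1 :> mat2 R.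
Proof. by rewrite /Q oppr0; exact: mk2_1. Qed.

Lemma part2 (R : realType) : ~ (@Mirr R `<=` @Mcirc R).
Proof.
set g1 := Q 0 1 0 0 : mat2 R; set g2 := Q 0 0 1 0 : mat2 R.
have n1 : (0:R)^+2 + 1^+2 + 0^+2 + 0^+2 = 1 by rewrite expr0n expr1n /=; ring.
have n2 : (0:R)^+2 + 0^+2 + 1^+2 + 0^+2 = 1 by rewrite expr0n expr1n /=; ring.
have n0 : (1:R)^+2 + 0^+2 + 0^+2 + 0^+2 = 1 by rewrite expr0n expr1n /=; ring.
have S1 : SU2 g1 by exact: Q_SU2.
have S2 : SU2 g2 by exact: Q_SU2.
have S0 : SU2 (1 : mat2 R) by rewrite -Q1; exact: Q_SU2.
set q0 : quad R := (g1, 1, g2, 1).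
move=> /(_ (qclass q0)) H.
have : Mcirc (qclass q0).
  apply: H; exists q0; split.
  - split => //=; rewrite /comm2 !mulr1 invr1 !mulr1 !mulrV ?mulr1 //.
    + exact: Q_unit.
    + exact: Q_unit.
  - rewrite /abelianq => hab.
    have := hab (@Ordinal 4 0 isT) (@Ordinal 4 2 isT); rewrite /= /g1 /g2 !QM.
    move=> /Q_inj [_ _ _]; lra.
  - by [].
move=> [q [hR heq hint]].
have : qclass q q.
  exists 1; split => //; case: q {hR heq hint} => [[[a b] c] d].
  by rewrite /conjq invr1 !mul1r !mulr1.
rewrite -heq => -[k [Sk Eq]].
move: hint; rewrite Eq /muq /conjq /qh1 /qh2 /= mulr1 mulrV; last exact: SU2_unit.
rewrite mulr1 -Q1 fSU2_Q acos1 mul0r => /int_facets [h _ _ _].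
by move: h; rewrite !mxE /=; lra.
Qed.

Theorem mainTheorem6 (R : realType) : @Mcirc R `<` @Mirr R.
Proof. split; [exact: part1 | exact: part2]. Qed.
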